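(* Let $K$ be a compact convex subset of $\mathbb{R}^N$ and $f:K\to\mathbb{R}$ a function. Let $\mathbf{x}_1,\dots,\mathbf{x}_m,\mathbf{y}_1,\dots,\mathbf{y}_n\in K$ and let $\lambda_1,\dots,\lambda_m>0$, $\mu_1,\dots,\mu_n>0$, so that $\sum_{i=1}^m\lambda_i\delta_{\mathbf{x}_i}$ and $\sum_{j=1}^n\mu_j\delta_{\mathbf{y}_j}$ are positive discrete measures concentrated at points of $K$. Suppose that each $\mathbf{x}_i$ ($i=1,\dots,m$) is a point of convexity of $f$ relative to $K$, and that $$\sum_{i=1}^m\lambda_i\delta_{\mathbf{x}_i}\prec\sum_{j=1}^n\mu_j\delta_{\mathbf{y}_j}.$$ Then $$\sum_{i=1}^m\lambda_i f(\mathbf{x}_i)\le\sum_{j=1}^n\mu_j f(\mathbf{y}_j).$$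
   Context: $\delta_{\mathbf{x}}$ denotes the Dirac measure at $\mathbf{x}$. The relation $\sum_{i=1}^m\lambda_i\delta_{\mathbf{x}_i}\prec\sum_{j=1}^n\mu_j\delta_{\mathbf{y}_j}$ means that there exists an $m\times n$ real matrix $A=(a_{ij})$ such that $a_{ij}\ge0$ for all $i,j$; $\sum_{j=1}^n a_{ij}=1$ for $i=1,\dots,m$; $\mu_j=\sum_{i=1}^m a_{ij}\lambda_i$ for $j=1,\dots,n$; and $\mathbf{x}_i=\sum_{j=1}^n a_{ij}\mathbf{y}_j$ for $i=1,\dots,m$. A point $a\in K$ is a point of convexity of $f$ relative to a convex set $V\subseteq K$ if $a\in V$ and $f(a)\le\sum_{k=1}^n\lambda_k f(x_k)$ for every finite family of points $x_1,\dots,x_n\in V$ and positive weights $\lambda_1,\dots,\lambda_n$ with $\sum_k\lambda_k=1$ and $\sum_k\lambda_k x_k=a$. *)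

(* Defs.v *)
From HB Require Import structures.
From mathcomp Require Import all_boot all_order all_algebra.
From mathcomp Require Import all_classical all_reals topology normedtype.
Set Implicit Arguments. Unset Strict Implicit. Unset Printing Implicit Defensive.
Import Order.TTheory GRing.Theory Num.Theory.
Import numFieldNormedType.Exports.
Local Open Scope classical_set_scope.
Local Open Scope ring_scope.

Definition convex_set (R : realType) (N : nat) (V : set 'rV[R]_N) : Prop :=
  forall x y t, V x -> V y -> 0 <= t -> t <= 1 -> V (t *: x + (1 - t) *: y).

Definition point_of_convexity (R : realType) (N : nat)
    (f : 'rV[R]_N -> R) (V : set 'rV[R]_N) (a : 'rV[R]_N) : Prop :=
  V a /\
  forall (n : nat) (x : 'I_n -> 'rV[R]_N) (lam : 'I_n -> R),
    (forall k, V (x k)) -> (forall k, 0 < lam k) ->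
    \sum_(k < n) lam k = 1 -> \sum_(k < n) lam k *: x k = a ->
    f a <= \sum_(k < n) lam k * f (x k).

Definition discrete_prec (R : realType) (N m n : nat)
    (lam : 'I_m -> R) (x : 'I_m -> 'rV[R]_N)
    (mu : 'I_n -> R) (y : 'I_n -> 'rV[R]_N) : Prop :=
  exists A : 'M[R]_(m, n),
    [/\ forall i j, 0 <= A i j,
        forall i, \sum_(j < n) A i j = 1,
        forall j, mu j = \sum_(i < m) A i j * lam i
      & forall i, x i = \sum_(j < n) A i j *: y j].

(* Main.v *)
Require Import Defs.
From HB Require Import structures.
From mathcomp Require Import all_boot all_order all_algebra.
From mathcomp Require Import all_classical all_reals topology normedtype.
Import Order.TTheory GRing.Theory Num.Theory.
Import numFieldNormedType.Exports.
Local Open Scope classical_set_scope.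
Local Open Scope ring_scope.

Lemma jensen_nonneg (R : realType) (N : nat) (K : set 'rV[R]_N)
    (f : 'rV[R]_N -> R) (n : nat) (y : 'I_n -> 'rV[R]_N) (w : 'I_n -> R) a :
  point_of_convexity f K a -> (forall j, K (y j)) -> (forall j, 0 <= w j) ->
  \sum_(j < n) w j = 1 -> \sum_(j < n) w j *: y j = a ->
  f a <= \sum_(j < n) w j * f (y j).
Proof.
move=> [Ka H] Ky w0 w1 wa.
pose S := [pred j : 'I_n | 0 < w j].
have split (F : 'I_n -> R) : (forall j, w j = 0 -> F j = 0) ->
    \sum_(j < n) F j = \sum_(k < #|S|) F (enum_val k).
  move=> HF; rewrite -(big_enum_val (A:=S)) /=.
  rewrite [LHS](bigID (fun j => j \in S)) /= [X in _ + X]big1 ?addr0 //.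
  move=> j; rewrite !inE => /negbTE hj.
  apply HF; apply/eqP; rewrite eq_le (w0 j) andbT leNgt; by rewrite hj.
have splitv (F : 'I_n -> 'rV[R]_N) : (forall j, w j = 0 -> F j = 0) ->
    \sum_(j < n) F j = \sum_(k < #|S|) F (enum_val k).
  move=> HF; rewrite -(big_enum_val (A:=S)) /=.
  rewrite [LHS](bigID (fun j => j \in S)) /= [X in _ + X]big1 ?addr0 //.
  move=> j; rewrite !inE => /negbTE hj.
  apply HF; apply/eqP; rewrite eq_le (w0 j) andbT leNgt; by rewrite hj.
rewrite (split (fun j => w j * f (y j))); last by move=> j ->; rewrite mul0r.
apply: H => //.
- move=> k; have := enum_valP k; by rewrite inE.
- by rewrite -(split w) // => j.
- by rewrite -(splitv (fun j => w j *: y j)) // => j ->; rewrite scale0r.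
Qed.

Theorem theorem2 (R : realType) (N : nat) (K : set 'rV[R]_N)
    (f : 'rV[R]_N -> R) (m n : nat)
    (x : 'I_m -> 'rV[R]_N) (y : 'I_n -> 'rV[R]_N)
    (lam : 'I_m -> R) (mu : 'I_n -> R) :
  compact K -> convex_set K ->
  (forall i, K (x i)) -> (forall j, K (y j)) ->
  (forall i, 0 < lam i) -> (forall j, 0 < mu j) ->
  (forall i, point_of_convexity f K (x i)) ->
  discrete_prec lam x mu y ->
  \sum_(i < m) lam i * f (x i) <= \sum_(j < n) mu j * f (y j).
Proof.
move=> _ _ Kx Ky lam0 _ Hc [A [A0 A1 Amu Ax]].
apply: (@le_trans _ _ (\sum_(i < m) lam i * \sum_(j < n) A i j * f (y j))).
  apply: ler_sum => i _; rewrite ler_pM2l //.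
  exact: (@jensen_nonneg R N K f n y (fun j => A i j) (x i) (Hc i) Ky (A0 i) (A1 i) (esym (Ax i))).
under eq_bigr => i _ do rewrite big_distrr /=.
rewrite exchange_big /=; apply: ler_sum => j _.
rewrite Amu big_distrl /= le_eqVlt; apply/orP; left; apply/eqP.
by apply: eq_bigr => i _; rewrite mulrA [lam i * _]mulrC.
Qed.
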